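(* Let $(X,\Sigma)$ be a random pair valued in $\mathcal{X}\times\mathfrak{S}_n$. Suppose that $P_x\in\mathcal{T}$ for all $x\in\mathcal{X}$ and that $H=\inf_{x\in\mathcal{X}}\min_{i<j}|p_{i,j}(x)-1/2|>0$. Let $s:\mathcal{X}\to\mathfrak{S}_n$ be measurable and set $$Z(s)=\sum_{i<j}\mathbb{I}\{(\Sigma(i)-\Sigma(j))(s(X)(i)-s(X)(j))<0\}-\sum_{i<j}\mathbb{I}\{(\Sigma(i)-\Sigma(j))(\sigma^*_{P_X}(i)-\sigma^*_{P_X}(j))<0\}.$$ Then $$\mathrm{Var}(Z(s))\le\Big(\frac{n(n-1)}{2H}\Big)\times(\mathcal{R}(s)-\mathcal{R}^* ).$$
   Context: $\mathfrak{S}_n$ is the set of permutations of $\{1,\dots,n\}$. The Kendall $\tau$ distance is $d_\tau(\sigma,\sigma')=\sum_{i<j}\mathbb{I}\{(\sigma(i)-\sigma(j))(\sigma'(i)-\sigma'(j))<0\}$. Conditional objects: $P_x$ is the conditional law of $\Sigma$ given $X=x$, and $p_{i,j}(x)=\mathbb{P}\{\Sigma(i)<\Sigma(j)\mid X=x\}$. $\mathcal{T}$ is the set of distributions $P$ on $\mathfrak{S}_n$ whose pairwise probabilities $p_{i,j}=\mathbb{P}_{\Sigma\sim P}\{\Sigma(i)<\Sigma(j)\}$ satisfy (a) $p_{i,j}\ge1/2$ and $p_{j,k}\ge1/2$ imply $p_{i,k}\ge1/2$, and (b) $p_{i,j}\ne1/2$ for $i<j$. For $P\in\mathcal{T}$,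 $\sigma^*_P(i)=1+\sum_{k\ne i}\mathbb{I}\{p_{i,k}<1/2\}$ is the unique Kemeny median, i.e. the unique minimizer of $\sigma\mapsto\mathbb{E}_{\Sigma\sim P}[d_\tau(\Sigma,\sigma)]$. The risk is $\mathcal{R}(s)=\mathbb{E}[d_\tau(s(X),\Sigma)]$, and $\mathcal{R}^*$ is its infimum over measurable rules $\mathcal{X}\to\mathfrak{S}_n$. *)

(* Defs.v *)
From HB Require Import structures.
From mathcomp Require Import all_boot all_order all_algebra all_fingroup.
From mathcomp Require Import all_classical all_reals all_analysis.
Set Implicit Arguments. Unset Strict Implicit. Unset Printing Implicit Defensive.
Import Order.TTheory GRing.Theory Num.Theory.
Local Open Scope ring_scope.
Local Open Scope classical_set_scope.

Definition discord (n : nat) (f g : 'I_n -> nat) : nat :=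
  \sum_(i < n) \sum_(j < n | (i < j)%N)
     (((f i)%:Z - (f j)%:Z) * ((g i)%:Z - (g j)%:Z) < 0)%R.

(* Kendall tau distance on S_n ('S_n = {perm 'I_n}, ranks are 0-based,
   which does not change any difference sigma(i) - sigma(j)). *)
Definition kendall (n : nat) (s s' : 'S_n) : nat :=
  discord (fun i => nat_of_ord (s i)) (fun i => nat_of_ord (s' i)).

(* A conditional law x |-> P_x is given by its probability mass function
   P x : 'S_n -> R.  Pairwise probabilities p_{i,j}(x). *)
Definition pairp (R : realType) (T : Type) (n : nat) (P : T -> 'S_n -> R)
  (x : T) (i j : 'I_n) : R :=
  \sum_(s : 'S_n) P x s * ((s i < s j)%N)%:R.

Definition in_T (R : realType) (n : nat) (p : 'I_n -> 'I_n -> R) : Prop :=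
  (forall i j k : 'I_n, i != j -> j != k -> i != k ->
     1/2 <= p i j -> 1/2 <= p j k -> 1/2 <= p i k) /\
  (forall i j : 'I_n, (i < j)%N -> p i j != 1/2).

Definition kemeny_star (R : realType) (n : nat) (p : 'I_n -> 'I_n -> R)
  (i : 'I_n) : nat :=
  (1 + \sum_(k < n | k != i) nat_of_bool (p i k < 1/2)%R)%N.

(* Expectation of f(X, Sigma) when X ~ mu and Sigma | X = x ~ P x. *)
Definition Exp (d : measure_display) (T : measurableType d) (R : realType)
  (n : nat) (mu : probability T R) (P : T -> 'S_n -> R)
  (f : T -> 'S_n -> R) : R :=
  Rintegral mu setT (fun x => \sum_(s : 'S_n) P x s * f x s).

Definition Var (d : measure_display) (T : measurableType d) (R : realType)
  (n : nat) (mu : probability T R) (P : T -> 'S_n -> R)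
  (f : T -> 'S_n -> R) : R :=
  Exp mu P (fun x s => (f x s - Exp mu P f) ^+ 2).

(* Measurability of a ranking rule s : T -> S_n (S_n discrete). *)
Definition measurable_rule (d : measure_display) (T : measurableType d)
  (n : nat) (r : T -> 'S_n) : Prop :=
  forall s : 'S_n, measurable (r @^-1` [set s]).

Definition risk (d : measure_display) (T : measurableType d) (R : realType)
  (n : nat) (mu : probability T R) (P : T -> 'S_n -> R) (r : T -> 'S_n) : R :=
  Exp mu P (fun x s => (kendall (r x) s)%:R).

Definition risk_star (d : measure_display) (T : measurableType d)
  (R : realType) (n : nat) (mu : probability T R) (P : T -> 'S_n -> R) : R :=
  inf [set risk mu P r | r in [set r : T -> 'S_n | measurable_rule r]].

Definition Hmargin (R : realType) (T : Type) (n : nat) (P : T -> 'S_n -> R) : R :=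
  inf [set r : R | exists x (i j : 'I_n), (i < j)%N /\
                     r = `|pairp P x i j - 1/2|].

Definition Zs (R : realType) (T : Type) (n : nat) (P : T -> 'S_n -> R)
  (r : T -> 'S_n) (x : T) (sg : 'S_n) : R :=
  (discord (fun i => nat_of_ord (sg i)) (fun i => nat_of_ord (r x i)))%:R -
  (discord (fun i => nat_of_ord (sg i)) (kemeny_star (pairp P x)))%:R.

(* Main.v *)
Require Import Defs.
From HB Require Import structures.
From mathcomp Require Import all_boot all_order all_algebra all_fingroup.
From mathcomp Require Import all_classical all_reals all_analysis.
From mathcomp Require Import lra ring measurable_realfun.
Import Order.TTheory GRing.Theory Num.Theory.
Local Open Scope ring_scope.
Local Open Scope classical_set_scope.
Set Implicit Arguments. Unset Strict Implicit. Unset Printing Implicit Defensive.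
Lemma disc_bool (a b c e : nat) : a != b -> c != e ->
  (((a%:Z - b%:Z) * (c%:Z - e%:Z) < 0)%R) = ((a < b)%N != (c < e)%N).
Proof.
move=> hab hce.
rewrite neq0_mulr_lt0 ?subr_eq0 ?eqz_nat // !subr_lt0 !ltz_nat.
by case: (a < b)%N; case: (c < e)%N.
Qed.

Definition mkperm n (g : 'I_n -> 'I_n) : 'S_n :=
  if injectiveP g is ReflectT h then perm h else 1%g.

Lemma mkpermE n (g : 'I_n -> 'I_n) : injective g -> mkperm g =1 g.
Proof. by rewrite /mkperm; case: injectiveP => // h _ i; rewrite permE. Qed.

Section Comb.
Variables (R : realType) (T : Type) (n : nat) (P : T -> 'S_n -> R) (x : T).
Hypothesis P_ge0 : forall s, 0 <= P x s.
Hypothesis P_sum1 : \sum_(s : 'S_n) P x s = 1.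

Lemma perm_nat_neq (s : 'S_n) (i j : 'I_n) : i != j -> nat_of_ord (s i) != s j.
Proof. by move=> h; rewrite (inj_eq val_inj) (inj_eq perm_inj). Qed.

Lemma pair_sum (i j : 'I_n) : i != j -> pairp P x i j + pairp P x j i = 1.
Proof.
move=> hij; rewrite /pairp -big_split /= -[RHS]P_sum1; apply: eq_bigr => s _.
rewrite -mulrDr -natrD.
have := perm_nat_neq s hij.
by case: ltngtP => //= _ _; rewrite mulr1.
Qed.

Lemma sum_notlt (i j : 'I_n) : i != j ->
  \sum_(s : 'S_n) P x s * (~~ (s i < s j)%N)%:R = pairp P x j i.
Proof.
move=> hij; apply: eq_bigr => s _; congr (_ * _%:R).
have := perm_nat_neq s hij.
by case: ltngtP.
Qed.


Hypothesis hT : in_T (pairp P x).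
Local Notation p := (pairp P x).
Local Notation ks := (kemeny_star (pairp P x)).

Lemma p_neq (i j : 'I_n) : i != j -> p i j != 1/2.
Proof.
move=> hij; case: (ltngtP i j) => h.
- exact: hT.2.
- have := hT.2 _ _ h; rewrite eq_sym in hij.
  have := pair_sum hij => hs.
  apply: contra => /eqP e; apply/eqP; move: hs; rewrite e => hs; lra.
- by move/eqP: hij; move/val_inj: h.
Qed.

Lemma key_lt (i j : 'I_n) : i != j -> 1/2 < p i j -> (ks i < ks j)%N.
Proof.
move=> hij hp; rewrite /kemeny_star ltn_add2l.
rewrite [X in (X < _)%N]big_mkcond [X in (_ < X)%N]big_mkcond /=.
rewrite (bigD1 i) //= (bigD1 i (P := predT)) //= eqxx /= add0n.
rewrite -add1n; apply: leq_add.
  rewrite ifT //.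
  have := pair_sum hij; have := p_neq hij => _ hs.
  have -> : p j i < 1/2 by lra.
  by [].
apply: leq_sum => k hk.
case: eqP => [->|hki] //=.
case: ltP => //= hik.
have hkj : k != j.
  by apply/eqP => e; move: hik; rewrite e; lra.
rewrite hkj /=.
have hki' : k != i by apply/eqP.
have h1 := pair_sum hki'.
have hkj1 : 1/2 <= p k j.
  apply: (hT.1 k i j) => //; lra.
have := p_neq hkj; have := pair_sum hkj => h2 h3.
have : p k j != 1/2 := h3.
rewrite neq_lt => /orP[h4|h4]; first lra.
have -> : p j k < 1/2 by lra.
by [].
Qed.

Lemma ks_lt (i j : 'I_n) : i != j -> (ks i < ks j)%N = (1/2 < p i j).
Proof.
move=> hij; case: (boolP (1/2 < p i j)) => h; first exact: key_lt.
apply/negbTE; rewrite -leqNgt; apply: ltnW; apply: key_lt; first by rewrite eq_sym.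
have := p_neq hij; have := pair_sum hij => hs hne.
move: h hne; rewrite -leNgt le_eqVlt => /orP[/eqP -> |]; first by rewrite eqxx.
move=> *; lra.
Qed.

Lemma ks_gt0 (i : 'I_n) : (0 < ks i)%N.
Proof. by rewrite /kemeny_star add1n. Qed.

Lemma ks_le (i : 'I_n) : (ks i <= n)%N.
Proof.
rewrite /kemeny_star add1n.
apply: (@leq_trans (\sum_(k < n | k != i) 1%N).+1).
  by rewrite ltnS; apply: leq_sum => k _; case: (_ < _).
rewrite sum1_card cardC1 card_ord.
by case: n i => [[]|].
Qed.

Lemma ks_inj : injective ks.
Proof.
move=> i j e; case: (eqVneq i j) => // hij.
have h1 := ks_lt hij; have h2 := ks_lt (negbT (introF eqP (fun e' => (negP hij) (introT eqP (esym e'))))).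
rewrite e ltnn in h1 h2.
have := pair_sum hij; have := p_neq hij.
move: h1 h2 => /esym/negbT h1 /esym/negbT h2.
rewrite -leNgt in h1; rewrite -leNgt in h2.
move=> hne hs; exfalso; move/negP: hne; apply; apply/eqP; lra.
Qed.

End Comb.

Definition rk_of n (f : 'I_n -> nat) (i : 'I_n) : 'I_n := insubd i (f i).-1.

Lemma discord_sym n (f g : 'I_n -> nat) : discord f g = discord g f.
Proof. by apply: eq_bigr => i _; apply: eq_bigr => j _; rewrite mulrC. Qed.

Lemma discord_pred n (F G : 'I_n -> nat) : (forall i, 0 < G i)%N ->
  discord F (fun i => (G i).-1) = discord F G.
Proof.
move=> hG; apply: eq_bigr => i _; apply: eq_bigr => j _.
have E k : ((G k).-1)%:Z = (G k)%:Z - 1.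
  by rewrite -{2}(prednK (hG k)) -addn1 PoszD addrK.
rewrite !E; congr (nat_of_bool (_ * _ < 0)); ring.
Qed.

Lemma exch3 (R : realType) n (Q : 'S_n -> R) (f : 'S_n -> 'I_n -> 'I_n -> R) :
  \sum_(sg : 'S_n) Q sg * (\sum_(i < n) \sum_(j < n | (i < j)%N) f sg i j) =
  \sum_(i < n) \sum_(j < n | (i < j)%N) \sum_(sg : 'S_n) Q sg * f sg i j.
Proof.
under eq_bigr do rewrite mulr_sumr; rewrite exchange_big; apply: eq_bigr => i _.
by under eq_bigr do rewrite mulr_sumr; rewrite exchange_big.
Qed.

Section Comb2.
Variables (R : realType) (T : Type) (n : nat) (P : T -> 'S_n -> R) (x : T).
Hypothesis P_ge0 : forall s, 0 <= P x s.
Hypothesis P_sum1 : \sum_(s : 'S_n) P x s = 1.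
Hypothesis hT : in_T (pairp P x).
Variable r : T -> 'S_n.
Local Notation p := (pairp P x).
Local Notation ks := (kemeny_star (pairp P x)).

Definition cc (i j : 'I_n) : bool := ((r x i < r x j)%N != (ks i < ks j)%N).
Definition bb (sg : 'S_n) (i j : 'I_n) : bool := ((sg i < sg j)%N != (ks i < ks j)%N).
Definition DD : R := \sum_(i < n) \sum_(j < n | (i < j)%N) (cc i j)%:R.

Lemma ord_neq (i j : 'I_n) : (i < j)%N -> i != j.
Proof. by move=> h; rewrite -(inj_eq val_inj) /= neq_ltn h. Qed.

Lemma Zexpr (sg : 'S_n) : Zs P r x sg =
  \sum_(i < n) \sum_(j < n | (i < j)%N) (cc i j)%:R * (1 - 2 * (bb sg i j)%:R).
Proof.
rewrite /Zs /discord !natr_sum -sumrB; apply: eq_bigr => i _.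
rewrite !natr_sum -sumrB; apply: eq_bigr => j hij.
have hij' := ord_neq hij.
rewrite !disc_bool ?perm_nat_neq ?(inj_eq (@ks_inj _ _ _ _ _ P_sum1 hT)) //.
rewrite /cc /bb.
by case: (sg i < sg j)%N; case: (r x i < r x j)%N; case: (ks i < ks j)%N => /=; lra.
Qed.


Lemma sum_bb (i j : 'I_n) : (i < j)%N ->
  1 - 2 * \sum_(sg : 'S_n) P x sg * (bb sg i j)%:R = 2 * `|p i j - 1/2|.
Proof.
move=> hij; have hij' := ord_neq hij.
have -> : \sum_(sg : 'S_n) P x sg * (bb sg i j)%:R =
          if (ks i < ks j)%N then p j i else p i j.
  rewrite /bb; case: (ks i < ks j)%N.
    by rewrite -(sum_notlt P x hij'); apply: eq_bigr => s _; case: (_ < _)%N.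
  by apply: eq_bigr => s _; case: (_ < _)%N.
rewrite (ks_lt P_sum1 hT hij'); have hs := pair_sum P_sum1 hij'.
case: ifP => h.
  rewrite ger0_norm; first lra. rewrite subr_ge0; lra.
rewrite ler0_norm; first lra. rewrite subr_le0; move/negbT: h; rewrite -leNgt. done.
Qed.

Lemma W_expr : \sum_(sg : 'S_n) P x sg * Zs P r x sg =
  \sum_(i < n) \sum_(j < n | (i < j)%N) (cc i j)%:R * (2 * `|p i j - 1/2|).
Proof.
under eq_bigr do rewrite Zexpr.
rewrite exch3; apply: eq_bigr => i _; apply: eq_bigr => j hij.
rewrite -sum_bb //.
rewrite (eq_bigr (fun sg => (cc i j)%:R * P x sg - (cc i j)%:R * 2 * (P x sg * (bb sg i j)%:R))); last by move=> sg _; ring.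
rewrite sumrB -!mulr_sumr P_sum1; ring.
Qed.

Lemma W_ge (H : R) : (forall i j : 'I_n, (i < j)%N -> H <= `|p i j - 1/2|) ->
  2 * H * DD <= \sum_(sg : 'S_n) P x sg * Zs P r x sg.
Proof.
move=> hH; rewrite W_expr /DD mulr_sumr; apply: ler_sum => i _.
rewrite mulr_sumr; apply: ler_sum => j hij.
have := hH _ _ hij; case: (cc i j) => /= h; lra.
Qed.

Lemma DD_ge0 : 0 <= DD.
Proof. by apply: sumr_ge0 => i _; apply: sumr_ge0 => j _; apply: ler0n. Qed.

Lemma Z_abs (sg : 'S_n) : `|Zs P r x sg| <= DD.
Proof.
rewrite Zexpr /DD; apply: (le_trans (ler_norm_sum _ _ _)); apply: ler_sum => i _.
apply: (le_trans (ler_norm_sum _ _ _)); apply: ler_sum => j _.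
by case: (cc i j); case: (bb sg i j); rewrite /= ler_norml; apply/andP; split; lra.
Qed.

Lemma DD_le : DD <= (n * (n - 1))%:R.
Proof.
rewrite /DD; under eq_bigr do rewrite -natr_sum; rewrite -natr_sum ler_nat.
apply: (@leq_trans (\sum_(i < n) (n - 1))%N); last by rewrite sum_nat_const card_ord.
apply: leq_sum => i _.
apply: (@leq_trans (\sum_(j < n | j != i) 1)%N); last first.
  by rewrite sum1_card cardC1 card_ord subn1.
rewrite big_mkcond [X in (_ <= X)%N]big_mkcond /=; apply: leq_sum => j _.
case: ifP => h //; rewrite ifT; first by case: (cc i j).
by rewrite eq_sym ord_neq.
Qed.


Lemma W_ge0 : 0 <= \sum_(sg : 'S_n) P x sg * Zs P r x sg.
Proof.
rewrite W_expr; apply: sumr_ge0 => i _; apply: sumr_ge0 => j _.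
by apply: mulr_ge0 => //; apply: mulr_ge0.
Qed.

Lemma V_le (H : R) : 0 < H ->
  (forall i j : 'I_n, (i < j)%N -> H <= `|p i j - 1/2|) ->
  \sum_(sg : 'S_n) P x sg * (Zs P r x sg) ^+ 2 <=
  (n * (n - 1))%:R / (2 * H) * \sum_(sg : 'S_n) P x sg * Zs P r x sg.
Proof.
move=> H0 hH.
have hW := W_ge hH; have hD0 := DD_ge0; have hDn := DD_le.
set W := \sum_(sg : 'S_n) P x sg * Zs P r x sg in hW *.
set NN := ((n * (n - 1))%:R : R) in hDn *.
apply: (@le_trans _ _ (DD ^+ 2)).
  rewrite -[X in _ <= X]mul1r -P_sum1 mulr_suml; apply: ler_sum => sg _.
  apply: ler_wpM2l => //.
  have := Z_abs sg; rewrite ler_norml => /andP[h1 h2]; nra.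
have hDW : DD <= W / (2 * H) by rewrite ler_pdivlMr ?mulr_gt0 //; lra.
rewrite mulrAC -mulrA; apply: (@le_trans _ _ (NN * DD)).
  by rewrite expr2; apply: ler_wpM2r.
apply: ler_wpM2l => //.
Qed.

End Comb2.

Section Meas.
Context d (T : measurableType d) (R : realType) (mu : probability T R).

Lemma fin_preimage (U : finType) (q : T -> U) :
  (forall u, measurable (q @^-1` [set u])) -> forall A : set U, measurable (q @^-1` A).
Proof.
move=> hq A.
have -> : q @^-1` A = \bigcup_(u in A) q @^-1` [set u].
  apply/seteqP; split => [t At | t [u Au /= e]]; last by rewrite /preimage /= e.
  by exists (q t).
by apply: fin_bigcup_measurable; first exact: finite_finset.
Qed.

Lemma fin_comp_meas (U : finType) (q : T -> U) :
  (forall u, measurable (q @^-1` [set u])) -> forall f : U -> R,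
  measurable_fun setT (f \o q).
Proof. by move=> hq f _ Y _; rewrite setTI; exact: (fin_preimage hq (f @^-1` Y)). Qed.

Lemma bounded_integrable (f : T -> R) (M : R) : measurable_fun setT f ->
  (forall x, `|f x| <= M) -> mu.-integrable setT (EFin \o f).
Proof.
move=> mf hM.
apply: (@le_integrable _ _ _ mu setT measurableT _ (EFin \o cst M)).
- exact/measurable_EFinP.
- move=> x _ /=; rewrite lee_fin; apply: (le_trans (hM x)).
  exact: ler_norm.
- exact: finite_measure_integrable_cst.
Qed.


Variables (n : nat) (P : T -> 'S_n -> R).
Hypothesis P_ge0 : forall x s, 0 <= P x s.
Hypothesis P_sum1 : forall x, \sum_(s : 'S_n) P x s = 1.
Hypothesis P_meas : forall s, measurable_fun setT (fun x => P x s).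

Lemma P_le1 x s : P x s <= 1.
Proof.
by rewrite -(P_sum1 x) (bigD1 s) //= lerDl; apply: sumr_ge0 => t _; exact: P_ge0.
Qed.

Lemma pairp_meas (i j : 'I_n) : measurable_fun setT (fun x => pairp P x i j).
Proof.
apply: measurable_sum => s; apply: measurable_realfun.measurable_funM => //.
Qed.

Definition bmat (x : T) : {ffun 'I_n * 'I_n -> bool} :=
  [ffun ik => pairp P x ik.1 ik.2 < 1/2].

Lemma bmat_meas B : measurable (bmat @^-1` [set B]).
Proof.
have -> : bmat @^-1` [set B] =
    ~` \bigcup_(ik in [set: 'I_n * 'I_n]) [set x | bmat x ik != B ik].
  apply/seteqP; split => x /=.
    by move=> e [ik _ /=]; rewrite /preimage /= in e; rewrite e eqxx.
  move=> h; apply/ffunP => ik; apply/eqP/negPn/negP => hne; apply: h.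
  by exists ik.
apply: measurableC; apply: fin_bigcup_measurable; first exact: finite_finset.
move=> ik _.
have mf := measurable_realfun.measurable_fun_ltr (pairp_meas ik.1 ik.2)
  (measurable_cst (1/2 : R)).
have := mf measurableT [set ~~ B ik] I; rewrite setTI.
congr measurable; apply/seteqP; split => x /=; rewrite ffunE.
  by case: (B ik); case: (_ < _).
by case: (B ik); case: (_ < _).
Qed.


Variable r : T -> 'S_n.
Hypothesis r_meas : measurable_rule r.

Definition qf (x : T) : 'S_n * {ffun 'I_n * 'I_n -> bool} := (r x, bmat x).

Lemma qf_meas u : measurable (qf @^-1` [set u]).
Proof.
case: u => s B.
have -> : qf @^-1` [set (s, B)] = r @^-1` [set s] `&` bmat @^-1` [set B].
  apply/seteqP; split => x /=; rewrite /preimage /qf /=.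
    by case=> -> ->.
  by case=> -> ->.
exact: measurableI (r_meas s) (bmat_meas B).
Qed.

Lemma integ_q (g : T -> R) (F : 'S_n * {ffun 'I_n * 'I_n -> bool} -> 'S_n -> R) :
  (forall x, g x = \sum_(s : 'S_n) P x s * F (qf x) s) ->
  mu.-integrable setT (EFin \o g).
Proof.
move=> hg.
apply: (@bounded_integrable _
   (\sum_(s : 'S_n) \sum_(u : 'S_n * {ffun 'I_n * 'I_n -> bool}) `|F u s|)).
  rewrite (_ : g = fun x => \sum_(s : 'S_n) P x s * F (qf x) s); last exact: funext.
  apply: measurable_sum => s; apply: measurable_realfun.measurable_funM => //.
  exact: (fin_comp_meas qf_meas (fun u => F u s)).
move=> x; rewrite hg; apply: (le_trans (ler_norm_sum _ _ _)); apply: ler_sum => s _.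
rewrite normrM (bigD1 (qf x)) //=.
apply: (@le_trans _ _ `|F (qf x) s|).
  rewrite -[X in _ <= X]mul1r; apply: ler_wpM2r => //.
  by rewrite ger0_norm ?P_ge0 ?P_le1.
by rewrite lerDl; apply: sumr_ge0 => u _.
Qed.

End Meas.

Definition ksB n (B : {ffun 'I_n * 'I_n -> bool}) (i : 'I_n) : nat :=
  (1 + \sum_(k < n | k != i) nat_of_bool (B (i, k)))%N.

Lemma ks_bmat d (T : measurableType d) (R : realType) n (P : T -> 'S_n -> R) x :
  kemeny_star (pairp P x) = ksB (bmat P x).
Proof.
apply: funext => i; rewrite /kemeny_star /ksB; congr (1 + _)%N.
by apply: eq_bigr => k _; rewrite ffunE.
Qed.

Unset Implicit Arguments.

Theorem lemma16 (d : measure_display) (T : measurableType d) (R : realType)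
  (n : nat) (mu : probability T R) (P : T -> 'S_n -> R)
  (P_ge0 : forall x s, 0 <= P x s)
  (P_sum1 : forall x, \sum_(s : 'S_n) P x s = 1)
  (P_meas : forall s, measurable_fun setT (fun x => P x s))
  (P_T : forall x, in_T (pairp P x))
  (H_pos : 0 < Hmargin P)
  (r : T -> 'S_n) (r_meas : measurable_rule r) :
  Var mu P (Zs P r) <=
    ((n * (n - 1))%:R / (2 * Hmargin P)) * (risk mu P r - risk_star mu P).
Proof.
set H := Hmargin P.
have hH : forall x (i j : 'I_n), (i < j)%N -> H <= `|pairp P x i j - 1/2|.
  move=> x i j hij; apply: ge_inf.
    by exists 0 => y [x' [i' [j' [_ ->]]]].
  by exists x, i, j.
have hq := qf_meas P_meas r_meas.
set rstar := fun x => mkperm (rk_of (ksB (bmat P x))).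
have rstar_meas : measurable_rule rstar.
  move=> s; exact: (fin_preimage hq
    ((fun u : 'S_n * {ffun 'I_n * 'I_n -> bool} => mkperm (rk_of (ksB u.2))) @^-1` [set s])).
have rstar_val : forall x i, nat_of_ord (rstar x i) = (kemeny_star (pairp P x) i).-1.
  move=> x; rewrite /rstar -ks_bmat.
  have hv : forall i, nat_of_ord (rk_of (kemeny_star (pairp P x)) i) =
                       (kemeny_star (pairp P x) i).-1.
    move=> i; rewrite /rk_of insubdK //.
    have h1 := ks_gt0 P x i; have h2 := ks_le P x i.
    by move: h1 h2; case: (kemeny_star (pairp P x) i) => [//|k] _ h3.
  move=> i; rewrite mkpermE ?hv //.
  move=> i1 i2 /(congr1 val); rewrite /= !hv => e.
  apply: (ks_inj (P_sum1 x) (P_T x)).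
  by rewrite -(prednK (ks_gt0 P x i1)) -(prednK (ks_gt0 P x i2)) e.
set ZF := fun (u : 'S_n * {ffun 'I_n * 'I_n -> bool}) (s : 'S_n) =>
  ((discord (fun i => nat_of_ord (s i)) (fun i => nat_of_ord (u.1 i)))%:R -
   (discord (fun i => nat_of_ord (s i)) (ksB u.2))%:R : R).
have hZ : forall x s, Zs P r x s = ZF (qf P r x) s.
  by move=> x s; rewrite /Zs ks_bmat.
set m := Exp mu P (Zs P r).
set c := (n * (n - 1))%:R / (2 * H).
have c_ge0 : 0 <= c by rewrite /c divr_ge0 // ?ler0n // mulr_ge0 // ltW.
set A := fun x => \sum_(s : 'S_n) P x s * (kendall (r x) s)%:R.
set B := fun x => \sum_(s : 'S_n) P x s * (kendall (rstar x) s)%:R.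
set W := fun x => \sum_(s : 'S_n) P x s * Zs P r x s.
set V := fun x => \sum_(s : 'S_n) P x s * (Zs P r x s) ^+ 2.
have iA : mu.-integrable setT (EFin \o A).
  by apply: (integ_q mu P_ge0 P_sum1 P_meas r_meas (F := fun u s => (kendall u.1 s)%:R)).
have iB : mu.-integrable setT (EFin \o B).
  by apply: (integ_q mu P_ge0 P_sum1 P_meas r_meas
    (F := fun u s => (kendall (mkperm (rk_of (ksB u.2))) s)%:R)).
have iW : mu.-integrable setT (EFin \o W).
  apply: (integ_q mu P_ge0 P_sum1 P_meas r_meas (F := ZF)) => x.
  by apply: eq_bigr => s _; rewrite hZ.
have iV : mu.-integrable setT (EFin \o V).
  apply: (integ_q mu P_ge0 P_sum1 P_meas r_meas (F := fun u s => ZF u s ^+ 2)) => x.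
  by apply: eq_bigr => s _; rewrite hZ.
have ikW : forall k : R, mu.-integrable setT (EFin \o (fun x => k * W x)).
  move=> k; apply: (integ_q mu P_ge0 P_sum1 P_meas r_meas (F := fun u s => k * ZF u s)) => x.
  by rewrite /W mulr_sumr; apply: eq_bigr => s _; rewrite hZ mulrCA.
have eqW : forall x, W x = A x - B x.
  move=> x; rewrite /W /A /B -sumrB; apply: eq_bigr => s _; rewrite -mulrBr /Zs /kendall.
  congr (_ * (_%:R - _%:R)); first exact: discord_sym.
  rewrite [RHS]discord_sym.
  rewrite (_ : (fun i => nat_of_ord (rstar x i)) = fun i => (kemeny_star (pairp P x) i).-1).
    by rewrite discord_pred // => i; exact: ks_gt0.
  by apply: funext => i; rewrite rstar_val.
have hm : m = risk mu P r - risk mu P rstar.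
  rewrite /risk /Exp -RintegralB //; apply: eq_Rintegral => x _; exact: eqW.
have risk_ge0 : forall r', 0 <= risk mu P r'.
  move=> r'; apply: Rintegral_ge0 => x _; apply: sumr_ge0 => s _.
  by apply: mulr_ge0 => //; exact: ler0n.
have hstar : risk_star mu P <= risk mu P rstar.
  apply: ge_inf.
    by exists 0 => y [r' _ <-].
  by exists rstar.
have m_ge0 : 0 <= m.
  by apply: Rintegral_ge0 => x _; exact: (W_ge0 (P_sum1 x) (P_T x) r).
have hVle : \int[mu]_x V x <= c * m.
  rewrite /m /Exp -RintegralZl //.
  apply: le_Rintegral => //; first exact: (ikW c).
  move=> x _; exact: (V_le (P_ge0 x) (P_sum1 x) (P_T x) r H_pos (hH x)).
have hVar : Var mu P (Zs P r) = \int[mu]_x V x - m ^+ 2.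
  rewrite /Var -/m /Exp.
  rewrite (@eq_Rintegral _ _ _ mu setT (fun x => (V x - (2 * m) * W x) + m ^+ 2)); last first.
    move=> x _.
    have e : m ^+ 2 = \sum_(s : 'S_n) P x s * m ^+ 2 by rewrite -mulr_suml P_sum1 mul1r.
    rewrite e /V /W mulr_sumr -sumrB -big_split /=.
    by apply: eq_bigr => s _; ring.
  rewrite RintegralD //; last exact: finite_measure_integrable_cst.
  rewrite RintegralB // RintegralZl // Rintegral_cst //.
  have -> : fine (mu [set: T]) = 1 by rewrite probability_setT.
  have -> : \int[mu]_x W x = m by [].
  by rewrite mulr1; ring.
  apply: (integ_q mu P_ge0 P_sum1 P_meas r_meas
    (F := fun u s => ZF u s ^+ 2 - 2 * m * ZF u s)) => x.
  rewrite /V /W mulr_sumr -sumrB; apply: eq_bigr => s _; rewrite hZ; ring.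
rewrite hVar.
have h1 : c * m <= c * (risk mu P r - risk_star mu P).
  by apply: ler_wpM2l => //; rewrite hm; lra.
have h2 : 0 <= m ^+ 2 by exact: sqr_ge0.
rewrite -/c; lra.
Qed.
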